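(* Let $P_7(\lambda;m,\varepsilon)$ be the polynomial in $\lambda$ defined in the context. There exist $\varepsilon_0>0$ and $\delta>0$, and a unique function $m^c:(0,\varepsilon_0)\to(6-\delta,6+\delta)$ with $m^c(\varepsilon)\to 6$ as $\varepsilon\to0^+$, such that for every $\varepsilon\in(0,\varepsilon_0)$ the polynomial $\widetilde P_7(\lambda;\varepsilon):=P_7(\lambda;m^c(\varepsilon),\varepsilon)$ has exactly one pair of purely imaginary roots $\pm i\omega(\varepsilon)$, with $\omega(\varepsilon)>0$. Moreover, $\omega(\varepsilon)$ converges to $\sqrt3$ as $\varepsilon$ tends to $0$.
   Context: $P_7(\lambda;m,\varepsilon)=a_0\lambda^7+a_1\lambda^6+a_2\lambda^5+a_3\lambda^4+a_4\lambda^3+a_5\lambda^2+a_6\lambda+a_7$ with $a_i=a_i(m,\varepsilon)$: $a_0=2^{11}(\varepsilon-1)^4\varepsilon^2$; $a_1=-2^{11}(\varepsilon^2-\varepsilon)^2[(5\varepsilon^2-2\varepsilon+1)m^2+2(\varepsilon+1)^2m+4]$; $a_2=(\varepsilon^2-\varepsilon)[\varepsilon(59\varepsilon^3-9\varepsilon^2+17\varepsilon-3)m^4+4\varepsilon(15\varepsilon^3+15\varepsilon^2+17\varepsilon+1)m^3+4(\varepsilon+2)(\varepsilon^3+9\varepsilon^2+5\varepsilon+1)m^2-8(2\varepsilon^3-3\varepsilon^2-4\varepsilon-3)m-8(\varepsilon-1)(\varepsilon+2)]$; $a_3=2^7[-\varepsilon^2(5\varepsilon-1)(9\varepsilon^3+\varepsilon^2+7\varepsilon-1)m^6-2\varepsilon^2(59\varepsilon^4-8\varepsilon^3+74\varepsilon^2+8\varepsilon-5)m^5-4\varepsilon(4\varepsilon^5+27\varepsilon^4+24\varepsilon^3+37\varepsilon^2+6\varepsilon-2)m^4+4\varepsilon(4\varepsilon^5+20\varepsilon^4-31\varepsilon^3-23\varepsilon^2-33\varepsilon-1)m^3+4(9\varepsilon^5+27\varepsilon^4-15\varepsilon^3-24\varepsilon^2-12\varepsilon-1)m^2+4(\varepsilon^4+17\varepsilon^3-7\varepsilon^2-9\varepsilon-2)m-4(\varepsilon-1)^2(2\varepsilon+1)]$;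 $a_4=2^3[\varepsilon^2(9\varepsilon-1)^2(\varepsilon-1)^2m^8+8\varepsilon^2(\varepsilon-1)(45\varepsilon^3+5\varepsilon^2-21\varepsilon+3)m^7+8\varepsilon(21\varepsilon^5-58\varepsilon^4-84\varepsilon^3-32\varepsilon^2+27\varepsilon-2)m^6-16\varepsilon(34\varepsilon^5+42\varepsilon^4+113\varepsilon^3+81\varepsilon^2-7\varepsilon-7)m^5-16(7\varepsilon^6+96\varepsilon^5+75\varepsilon^4+176\varepsilon^3+42\varepsilon^2-10\varepsilon-2)m^4+16\varepsilon(6\varepsilon^4-75\varepsilon^3-65\varepsilon^2-117\varepsilon-5)m^3+16(29\varepsilon^4-7\varepsilon^3-48\varepsilon^2-31\varepsilon-7)m^2+32(\varepsilon-1)(7\varepsilon^2+14\varepsilon+3)m-16(\varepsilon-1)^2]$; $a_5=2^5m[\varepsilon^2(\varepsilon-1)^2(9\varepsilon^2+\varepsilon-2)m^7+(\varepsilon^2-\varepsilon)(38\varepsilon^4+46\varepsilon^3-39\varepsilon^2+3)m^6+(36\varepsilon^6+33\varepsilon^5-123\varepsilon^4-95\varepsilon^3+54\varepsilon^2-1)m^5-(8\varepsilon^6-8\varepsilon^5+169\varepsilon^4+233\varepsilon^3+25\varepsilon^2-41\varepsilon-2)m^4-(60\varepsilon^5+110\varepsilon^4+320\varepsilon^3+129\varepsilon^2-22\varepsilon-21)m^3-4(16\varepsilon^4+37\varepsilon^3+41\varepsilon^2+7\varepsilon-5)m^2+2(4\varepsilon^3-37\varepsilon^2-10\varepsilon-5)m+4(5\varepsilon^2-2\varepsilon-3)]$;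 $a_6=2^3m[2\varepsilon^2(\varepsilon-1)^2(\varepsilon+1)(2\varepsilon-1)m^7+(\varepsilon^2-\varepsilon)(16\varepsilon^4+58\varepsilon^3-19\varepsilon^2-10\varepsilon+3)m^6+(16\varepsilon^6+72\varepsilon^5-39\varepsilon^4-171\varepsilon^3+42\varepsilon^2+17\varepsilon-1)m^5+2(20\varepsilon^5-12\varepsilon^4-113\varepsilon^3-69\varepsilon^2+41\varepsilon+5)m^4-(2\varepsilon+1)(18\varepsilon^3+81\varepsilon^2+80\varepsilon-51)m^3-4(28\varepsilon^3+31\varepsilon^2+20\varepsilon-15)m^2-4(11\varepsilon-3)(\varepsilon+1)m-8(1-\varepsilon)]$; $a_7=2^4(m^2+m^3)[\varepsilon^2(\varepsilon^2-1)(2\varepsilon-1)m^4+\varepsilon(2\varepsilon-1)(3\varepsilon^2-3\varepsilon-2)m^3+(2\varepsilon^4-13\varepsilon^2+4\varepsilon+1)m^2-3(2\varepsilon-1)(\varepsilon+1)m+2(1-2\varepsilon)]$. *)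

(* Defs.v *)
From Stdlib Require Import Reals.
From Coquelicot Require Import Coquelicot.
Open Scope R_scope.

Definition a0 (m e : R) : R := 2^11 * (e-1)^4 * e^2.

Definition a1 (m e : R) : R :=
  - 2^11 * (e^2-e)^2 * ((5*e^2-2*e+1)*m^2 + 2*(e+1)^2*m + 4).

Definition a2 (m e : R) : R :=
  (e^2-e) * ( e*(59*e^3-9*e^2+17*e-3)*m^4
            + 4*e*(15*e^3+15*e^2+17*e+1)*m^3
            + 4*(e+2)*(e^3+9*e^2+5*e+1)*m^2
            - 8*(2*e^3-3*e^2-4*e-3)*m
            - 8*(e-1)*(e+2) ).

Definition a3 (m e : R) : R :=
  2^7 * ( - e^2*(5*e-1)*(9*e^3+e^2+7*e-1)*m^6
          - 2*e^2*(59*e^4-8*e^3+74*e^2+8*e-5)*m^5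
          - 4*e*(4*e^5+27*e^4+24*e^3+37*e^2+6*e-2)*m^4
          + 4*e*(4*e^5+20*e^4-31*e^3-23*e^2-33*e-1)*m^3
          + 4*(9*e^5+27*e^4-15*e^3-24*e^2-12*e-1)*m^2
          + 4*(e^4+17*e^3-7*e^2-9*e-2)*m
          - 4*(e-1)^2*(2*e+1) ).

Definition a4 (m e : R) : R :=
  2^3 * ( e^2*(9*e-1)^2*(e-1)^2*m^8
        + 8*e^2*(e-1)*(45*e^3+5*e^2-21*e+3)*m^7
        + 8*e*(21*e^5-58*e^4-84*e^3-32*e^2+27*e-2)*m^6
        - 16*e*(34*e^5+42*e^4+113*e^3+81*e^2-7*e-7)*m^5
        - 16*(7*e^6+96*e^5+75*e^4+176*e^3+42*e^2-10*e-2)*m^4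
        + 16*e*(6*e^4-75*e^3-65*e^2-117*e-5)*m^3
        + 16*(29*e^4-7*e^3-48*e^2-31*e-7)*m^2
        + 32*(e-1)*(7*e^2+14*e+3)*m
        - 16*(e-1)^2 ).

Definition a5 (m e : R) : R :=
  2^5 * m * ( e^2*(e-1)^2*(9*e^2+e-2)*m^7
            + (e^2-e)*(38*e^4+46*e^3-39*e^2+3)*m^6
            + (36*e^6+33*e^5-123*e^4-95*e^3+54*e^2-1)*m^5
            - (8*e^6-8*e^5+169*e^4+233*e^3+25*e^2-41*e-2)*m^4
            - (60*e^5+110*e^4+320*e^3+129*e^2-22*e-21)*m^3
            - 4*(16*e^4+37*e^3+41*e^2+7*e-5)*m^2
            + 2*(4*e^3-37*e^2-10*e-5)*m
            + 4*(5*e^2-2*e-3) ).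

Definition a6 (m e : R) : R :=
  2^3 * m * ( 2*e^2*(e-1)^2*(e+1)*(2*e-1)*m^7
            + (e^2-e)*(16*e^4+58*e^3-19*e^2-10*e+3)*m^6
            + (16*e^6+72*e^5-39*e^4-171*e^3+42*e^2+17*e-1)*m^5
            + 2*(20*e^5-12*e^4-113*e^3-69*e^2+41*e+5)*m^4
            - (2*e+1)*(18*e^3+81*e^2+80*e-51)*m^3
            - 4*(28*e^3+31*e^2+20*e-15)*m^2
            - 4*(11*e-3)*(e+1)*m
            - 8*(1-e) ).

Definition a7 (m e : R) : R :=
  2^4 * (m^2+m^3) * ( e^2*(e^2-1)*(2*e-1)*m^4
                    + e*(2*e-1)*(3*e^2-3*e-2)*m^3
                    + (2*e^4-13*e^2+4*e+1)*m^2
                    - 3*(2*e-1)*(e+1)*m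
                    + 2*(1-2*e) ).

Definition P7 (lam : C) (m e : R) : C :=
  (RtoC (a0 m e) * Cpow lam 7 + RtoC (a1 m e) * Cpow lam 6
 + RtoC (a2 m e) * Cpow lam 5 + RtoC (a3 m e) * Cpow lam 4
 + RtoC (a4 m e) * Cpow lam 3 + RtoC (a5 m e) * Cpow lam 2
 + RtoC (a6 m e) * lam + RtoC (a7 m e))%C.

Definition purely_imaginary (z : C) : Prop := Re z = 0 /\ Im z <> 0.

Definition unique_imag_pair (m e w : R) : Prop :=
  0 < w /\
  forall z : C, purely_imaginary z -> (P7 z m e = 0%C <-> (z = (0, w) \/ z = (0, - w))).

(* Main.v *)
Require Import Defs.
From Stdlib Require Import Reals QArith Qreals Lra Lia Psatz ZArith List ClassicalEpsilon.
From Coquelicot Require Import Coquelicot.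
Import ListNotations.
Open Scope R_scope.

Definition mono := (Z * nat * nat * nat)%type.
Definition evm (t : mono) (u v e : R) : R :=
  match t with (c,i,j,k) => IZR c * u^i * v^j * e^k end.
Fixpoint ev (l : list mono) (u v e : R) : R :=
  match l with nil => 0 | t :: l' => evm t u v e + ev l' u v e end.

Definition is100 (t : mono) : bool :=
  match t with (_,1,0,0)%nat => true | _ => false end.
Definition is010 (t : mono) : bool :=
  match t with (_,0,1,0)%nat => true | _ => false end.
Definition is000 (t : mono) : bool :=
  match t with (_,0,0,0)%nat => true | _ => false end.
Definition coef (t : mono) : Z := match t with (c,_,_,_) => c end.

Fixpoint csum (p : mono -> bool) (l : list mono) : Z :=
  match l with nil => 0%Z | t :: l' => ((if p t then coef t else 0) + csum p l')%Z end.

Definition bumR (t : mono) (du dv de : R) : R :=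
  match t with (c,i,j,k) => if is100 t then 0 else Rabs (IZR c) * INR i * du^(i-1) * dv^j * de^k end.
Definition bvmR (t : mono) (du dv de : R) : R :=
  match t with (c,i,j,k) => if is010 t then 0 else Rabs (IZR c) * INR j * du^i * dv^(j-1) * de^k end.
Definition abmR (t : mono) (du dv de : R) : R :=
  match t with (c,i,j,k) => Rabs (IZR c) * du^i * dv^j * de^k end.
Definition vbmR (t : mono) (du dv de : R) : R :=
  if is000 t then 0 else abmR t du dv de.
Fixpoint lsum (f : mono -> R) (l : list mono) : R :=
  match l with nil => 0 | t :: l' => f t + lsum f l' end.

Fixpoint qp (q : Q) (n : nat) : Q := match n with O => 1%Q | S n => Qred (q * qp q n)%Q end.
Definition bumQ (t : mono) (du dv de : Q) : Q :=
  match t with (c,i,j,k) => if is100 t then 0%Q else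
    (inject_Z (Z.abs c) * inject_Z (Z.of_nat i) * qp du (i-1) * qp dv j * qp de k)%Q end.
Definition bvmQ (t : mono) (du dv de : Q) : Q :=
  match t with (c,i,j,k) => if is010 t then 0%Q else
    (inject_Z (Z.abs c) * inject_Z (Z.of_nat j) * qp du i * qp dv (j-1) * qp de k)%Q end.
Definition abmQ (t : mono) (du dv de : Q) : Q :=
  match t with (c,i,j,k) => (inject_Z (Z.abs c) * qp du i * qp dv j * qp de k)%Q end.
Definition vbmQ (t : mono) (du dv de : Q) : Q :=
  if is000 t then 0%Q else abmQ t du dv de.
Fixpoint lsumQ (f : mono -> Q) (l : list mono) : Q :=
  match l with nil => 0%Q | t :: l' => Qred (f t + lsumQ f l')%Q end.

Lemma Q2R_Qred q : Q2R (Qred q) = Q2R q.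
Proof. apply Qeq_eqR, Qred_correct. Qed.

Lemma Q2R_qp q n : Q2R (qp q n) = (Q2R q)^n.
Proof.
  induction n.
  - unfold Q2R; simpl; field.
  - change (qp q (S n)) with (Qred (q * qp q n)). simpl pow.
    rewrite Q2R_Qred, Q2R_mult, IHn; reflexivity.
Qed.

Lemma Q2R_Z z : Q2R (inject_Z z) = IZR z.
Proof. unfold Q2R, inject_Z; simpl; field. Qed.

Lemma Q2R_0 : Q2R 0 = 0.
Proof. unfold Q2R; simpl; field. Qed.

Lemma Q2R_lsum (fQ : mono -> Q) (fR : mono -> R) l :
  (forall t, Q2R (fQ t) = fR t) -> Q2R (lsumQ fQ l) = lsum fR l.
Proof.
  intro H; induction l.
  - apply Q2R_0.
  - change (lsumQ fQ (a :: l)) with (Qred (fQ a + lsumQ fQ l)). simpl lsum.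
    rewrite Q2R_Qred, Q2R_plus, H, IHl; reflexivity.
Qed.

Lemma Q2R_bum t du dv de : Q2R (bumQ t du dv de) = bumR t (Q2R du) (Q2R dv) (Q2R de).
Proof.
  destruct t as [[[c i] j] k]; unfold bumQ, bumR.
  destruct (is100 _). apply Q2R_0.
  rewrite !Q2R_mult, !Q2R_qp, !Q2R_Z, abs_IZR, <- INR_IZR_INZ; reflexivity.
Qed.
Lemma Q2R_bvm t du dv de : Q2R (bvmQ t du dv de) = bvmR t (Q2R du) (Q2R dv) (Q2R de).
Proof.
  destruct t as [[[c i] j] k]; unfold bvmQ, bvmR.
  destruct (is010 _). apply Q2R_0.
  rewrite !Q2R_mult, !Q2R_qp, !Q2R_Z, abs_IZR, <- INR_IZR_INZ; reflexivity.
Qed.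
Lemma Q2R_abm t du dv de : Q2R (abmQ t du dv de) = abmR t (Q2R du) (Q2R dv) (Q2R de).
Proof.
  destruct t as [[[c i] j] k]; unfold abmQ, abmR.
  rewrite !Q2R_mult, !Q2R_qp, !Q2R_Z, abs_IZR; reflexivity.
Qed.
Lemma Q2R_vbm t du dv de : Q2R (vbmQ t du dv de) = vbmR t (Q2R du) (Q2R dv) (Q2R de).
Proof.
  unfold vbmQ, vbmR; destruct (is000 t). apply Q2R_0. apply Q2R_abm.
Qed.

Lemma pow_diff n a b d : Rabs a <= d -> Rabs b <= d ->
  exists Sx, a^n - b^n = (a-b)*Sx /\ Rabs Sx <= INR n * d^(n-1).
Proof.
  intros Ha Hb. assert (Hd : 0 <= d) by (pose proof (Rabs_pos a); lra).
  induction n as [|n IH].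
  - exists 0. simpl. split; [ring|]. rewrite Rabs_R0; lra.
  - destruct IH as [Sx [HS HSb]].
    exists (a*Sx + b^n). split.
    + simpl. replace (a * a^n - b * b^n) with (a*(a^n - b^n) + (a-b)*b^n) by ring.
      rewrite HS; ring.
    + replace (S n - 1)%nat with n by lia. rewrite S_INR.
      eapply Rle_trans; [apply Rabs_triang|].
      rewrite Rabs_mult, <- RPow_abs.
      assert (Hb' : Rabs b ^ n <= d ^ n) by (apply pow_incr; split; [apply Rabs_pos|lra]).
      assert (Ha' : Rabs a * Rabs Sx <= d * (INR n * d^(n-1))).
      { apply Rmult_le_compat; try apply Rabs_pos; lra. }
      assert (d * (INR n * d^(n-1)) = INR n * d^n).
      { destruct n. simpl; ring. replace (S n - 1)%nat with n by lia. simpl; ring. }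
      lra.
Qed.

Lemma le4 a b c d A B C D : 0 <= a -> a <= A -> 0 <= b -> b <= B -> 0 <= c -> c <= C -> 0 <= d -> d <= D ->
  a*b*c*d <= A*B*C*D.
Proof.
  intros. apply Rmult_le_compat; try apply Rmult_le_pos; try apply Rmult_le_pos; auto.
  apply Rmult_le_compat; try apply Rmult_le_pos; auto.
  apply Rmult_le_compat; auto.
Qed.

Section Box.
Variables du dv de u1 v1 u2 v2 e : R.
Hypothesis Hu1 : Rabs u1 <= du.
Hypothesis Hu2 : Rabs u2 <= du.
Hypothesis Hv1 : Rabs v1 <= dv.
Hypothesis Hv2 : Rabs v2 <= dv.
Hypothesis He : Rabs e <= de.

Lemma mono_DD t : exists G1 G2,
  evm t u2 v2 e - evm t u1 v1 e = (u2-u1)*G1 + (v2-v1)*G2 /\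
  Rabs (G1 - IZR (if is100 t then coef t else 0)) <= bumR t du dv de /\
  Rabs (G2 - IZR (if is010 t then coef t else 0)) <= bvmR t du dv de.
Proof.
  assert (Hdu : 0 <= du) by (pose proof (Rabs_pos u1); lra).
  assert (Hdv : 0 <= dv) by (pose proof (Rabs_pos v1); lra).
  assert (Hde : 0 <= de) by (pose proof (Rabs_pos e); lra).
  destruct t as [[[c i] j] k].
  destruct (pow_diff i u2 u1 du Hu2 Hu1) as [Su [HSu HSub]].
  destruct (pow_diff j v2 v1 dv Hv2 Hv1) as [Sv [HSv HSvb]].
  assert (Hgen : evm (c,i,j,k) u2 v2 e - evm (c,i,j,k) u1 v1 e =
     (u2-u1)*(IZR c * e^k * Su * v2^j) + (v2-v1)*(IZR c * e^k * u1^i * Sv)).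
  { unfold evm. assert (E1 : u2^i = u1^i + (u2-u1)*Su) by lra.
    assert (E2 : v2^j = v1^j + (v2-v1)*Sv) by lra.
    rewrite E1, E2. ring. }
  assert (B1 : Rabs (IZR c * e^k * Su * v2^j) <= Rabs (IZR c) * INR i * du^(i-1) * dv^j * de^k).
  { rewrite !Rabs_mult, <- !RPow_abs.
    replace (Rabs (IZR c) * INR i * du ^ (i - 1) * dv ^ j * de ^ k) with
      (Rabs (IZR c) * de^k * (INR i * du ^ (i - 1)) * dv ^ j) by ring.
    apply le4; try apply Rabs_pos; try apply pow_le; try apply Rabs_pos; try lra;
      apply pow_incr; split; try apply Rabs_pos; lra. }
  assert (B2 : Rabs (IZR c * e^k * u1^i * Sv) <= Rabs (IZR c) * INR j * du^i * dv^(j-1) * de^k).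
  { rewrite !Rabs_mult, <- !RPow_abs.
    replace (Rabs (IZR c) * INR j * du ^ i * dv ^ (j - 1) * de ^ k) with
      (Rabs (IZR c) * de^k * du^i * (INR j * dv ^ (j - 1))) by ring.
    apply le4; try apply Rabs_pos; try apply pow_le; try apply Rabs_pos; try lra;
      apply pow_incr; split; try apply Rabs_pos; lra. }
  assert (P1 : 0 <= Rabs (IZR c) * INR i * du^(i-1) * dv^j * de^k).
  { pose proof (Rabs_pos (IZR c * e^k * Su * v2^j)); lra. }
  assert (P2 : 0 <= Rabs (IZR c) * INR j * du^i * dv^(j-1) * de^k).
  { pose proof (Rabs_pos (IZR c * e^k * u1^i * Sv)); lra. }
  unfold bumR, bvmR, coef.
  destruct (is100 (c,i,j,k)) eqn:E100.
  -
    destruct i as [|[|i]]; try discriminate; destruct j; try discriminate; destruct k; try discriminate.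
    exists (IZR c), 0. simpl. split; [unfold evm; simpl; ring|].
    rewrite !Rminus_diag, Rabs_R0. split; [lra|]. simpl in P2. lra.
  - destruct (is010 (c,i,j,k)) eqn:E010.
    + destruct i; try discriminate; destruct j as [|[|j]]; try discriminate; destruct k; try discriminate.
      exists 0, (IZR c). simpl. split; [unfold evm; simpl; ring|].
      rewrite !Rminus_diag, Rabs_R0. split; [|lra]. simpl in P1. lra.
    + exists (IZR c * e^k * Su * v2^j), (IZR c * e^k * u1^i * Sv).
      split; [exact Hgen|]. rewrite !Rminus_0_r. split; assumption.
Qed.

Lemma ev_DD l : exists G1 G2,
  ev l u2 v2 e - ev l u1 v1 e = (u2-u1)*G1 + (v2-v1)*G2 /\
  Rabs (G1 - IZR (csum is100 l)) <= lsum (fun t => bumR t du dv de) l /\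
  Rabs (G2 - IZR (csum is010 l)) <= lsum (fun t => bvmR t du dv de) l.
Proof.
  induction l as [|t l IH]; simpl.
  - exists 0, 0. rewrite Rminus_diag, Rabs_R0. repeat split; lra.
  - destruct IH as [G1 [G2 [HE [HB1 HB2]]]].
    destruct (mono_DD t) as [g1 [g2 [hE [hB1 hB2]]]].
    exists (g1 + G1), (g2 + G2). rewrite !plus_IZR. split.
    + replace (evm t u2 v2 e + ev l u2 v2 e - (evm t u1 v1 e + ev l u1 v1 e)) with
        ((evm t u2 v2 e - evm t u1 v1 e) + (ev l u2 v2 e - ev l u1 v1 e)) by ring.
      rewrite hE, HE; ring.
    + split.
      * eapply Rle_trans; [|apply Rplus_le_compat; [exact hB1|exact HB1]].
        eapply Rle_trans; [|apply Rabs_triang]. right; f_equal; ring.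
      * eapply Rle_trans; [|apply Rplus_le_compat; [exact hB2|exact HB2]].
        eapply Rle_trans; [|apply Rabs_triang]. right; f_equal; ring.
Qed.

Lemma ev_vb l : Rabs (ev l u1 v1 e - IZR (csum is000 l)) <= lsum (fun t => vbmR t du dv de) l.
Proof.
  assert (Hdu : 0 <= du) by (pose proof (Rabs_pos u1); lra).
  assert (Hdv : 0 <= dv) by (pose proof (Rabs_pos v1); lra).
  assert (Hde : 0 <= de) by (pose proof (Rabs_pos e); lra).
  induction l as [|t l IH]; simpl.
  - rewrite Rminus_diag, Rabs_R0; lra.
  - rewrite plus_IZR.
    eapply Rle_trans; [|apply Rplus_le_compat; [|exact IH]].
    2:{ instantiate (1 := Rabs (evm t u1 v1 e - IZR (if is000 t then coef t else 0))).
      destruct t as [[[c i] j] k]. unfold vbmR, abmR, coef, evm.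
      destruct (is000 (c,i,j,k)) eqn:E.
      - destruct i; try discriminate; destruct j; try discriminate; destruct k; try discriminate.
        simpl. right. replace (IZR c * 1 * 1 * 1 - IZR c) with 0 by ring. apply Rabs_R0.
      - rewrite Rminus_0_r, !Rabs_mult, <- !RPow_abs.
        apply le4; try apply Rabs_pos; try apply pow_le; try apply Rabs_pos; try lra;
        apply pow_incr; split; try apply Rabs_pos; lra. }
    eapply Rle_trans; [|apply Rabs_triang]. right; f_equal; ring.
Qed.

Lemma ev_ab l : Rabs (ev l u1 v1 e) <= lsum (fun t => abmR t du dv de) l.
Proof.
  assert (Hdu : 0 <= du) by (pose proof (Rabs_pos u1); lra).
  assert (Hdv : 0 <= dv) by (pose proof (Rabs_pos v1); lra).
  assert (Hde : 0 <= de) by (pose proof (Rabs_pos e); lra).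
  induction l as [|t l IH]; simpl.
  - rewrite Rabs_R0; lra.
  - eapply Rle_trans; [apply Rabs_triang|]. apply Rplus_le_compat; [|exact IH].
    destruct t as [[[c i] j] k]. unfold abmR, evm.
    rewrite !Rabs_mult, <- !RPow_abs.
    apply le4; try apply Rabs_pos; try apply pow_le; try apply Rabs_pos; try lra;
    apply pow_incr; split; try apply Rabs_pos; lra.
Qed.
End Box.

Fixpoint eshift (l : list mono) : list mono :=
  match l with nil => nil
  | (c,0,0,S k)%nat :: l' => (c,0,0,k)%nat :: eshift l'
  | _ :: l' => eshift l' end.

Lemma ev_eshift l e : ev l 0 0 e = IZR (csum is000 l) + e * ev (eshift l) 0 0 e.
Proof.
  induction l as [|t l IH]; simpl. ring.
  destruct t as [[[c i] j] k]. rewrite plus_IZR, IH.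
  destruct i; [destruct j; [destruct k|]|]; unfold evm, coef; simpl; ring.
Qed.

Definition LR : list mono := [
  ((58875264)%Z,0%nat,0%nat,1%nat);
  ((6547968)%Z,0%nat,0%nat,2%nat);
  ((-982937088)%Z,0%nat,0%nat,3%nat);
  ((-1133637120)%Z,0%nat,0%nat,4%nat);
  ((2584866816)%Z,0%nat,0%nat,5%nat);
  ((-6112641024)%Z,0%nat,0%nat,6%nat);
  ((-150528)%Z,0%nat,1%nat,0%nat);
  ((21783552)%Z,0%nat,1%nat,1%nat);
  ((-9010176)%Z,0%nat,1%nat,2%nat);
  ((-241898496)%Z,0%nat,1%nat,3%nat);
  ((-1473067008)%Z,0%nat,1%nat,4%nat);
  ((915038208)%Z,0%nat,1%nat,5%nat);
  ((-3195666432)%Z,0%nat,1%nat,6%nat);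
  ((-25088)%Z,0%nat,2%nat,0%nat);
  ((967680)%Z,0%nat,2%nat,1%nat);
  ((-3153408)%Z,0%nat,2%nat,2%nat);
  ((25616384)%Z,0%nat,2%nat,3%nat);
  ((-362941440)%Z,0%nat,2%nat,4%nat);
  ((16312320)%Z,0%nat,2%nat,5%nat);
  ((-384860160)%Z,0%nat,2%nat,6%nat);
  ((106496)%Z,0%nat,3%nat,2%nat);
  ((-311296)%Z,0%nat,3%nat,3%nat);
  ((696320)%Z,0%nat,3%nat,4%nat);
  ((-884736)%Z,0%nat,3%nat,5%nat);
  ((393216)%Z,0%nat,3%nat,6%nat);
  ((1401792)%Z,1%nat,0%nat,0%nat);
  ((75918528)%Z,1%nat,0%nat,1%nat);
  ((105600768)%Z,1%nat,0%nat,2%nat);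
  ((-1355422464)%Z,1%nat,0%nat,3%nat);
  ((-780069888)%Z,1%nat,0%nat,4%nat);
  ((3497582592)%Z,1%nat,0%nat,5%nat);
  ((-6592610304)%Z,1%nat,0%nat,6%nat);
  ((389760)%Z,1%nat,1%nat,0%nat);
  ((26854144)%Z,1%nat,1%nat,1%nat);
  ((27626624)%Z,1%nat,1%nat,2%nat);
  ((-325036032)%Z,1%nat,1%nat,3%nat);
  ((-1269441024)%Z,1%nat,1%nat,4%nat);
  ((1235699712)%Z,1%nat,1%nat,5%nat);
  ((-3299733504)%Z,1%nat,1%nat,6%nat);
  ((-7168)%Z,1%nat,2%nat,0%nat);
  ((751104)%Z,1%nat,2%nat,1%nat);
  ((-2049536)%Z,1%nat,2%nat,2%nat);
  ((39784960)%Z,1%nat,2%nat,3%nat);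
  ((-335830528)%Z,1%nat,2%nat,4%nat);
  ((23721984)%Z,1%nat,2%nat,5%nat);
  ((-367017984)%Z,1%nat,2%nat,6%nat);
  ((28672)%Z,1%nat,3%nat,2%nat);
  ((-98304)%Z,1%nat,3%nat,3%nat);
  ((237568)%Z,1%nat,3%nat,4%nat);
  ((-294912)%Z,1%nat,3%nat,5%nat);
  ((126976)%Z,1%nat,3%nat,6%nat);
  ((1027712)%Z,2%nat,0%nat,0%nat);
  ((40804832)%Z,2%nat,0%nat,1%nat);
  ((106951296)%Z,2%nat,0%nat,2%nat);
  ((-824996352)%Z,2%nat,0%nat,3%nat);
  ((-183831552)%Z,2%nat,0%nat,4%nat);
  ((2053983744)%Z,2%nat,0%nat,5%nat);
  ((-3094695936)%Z,2%nat,0%nat,6%nat);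
  ((324416)%Z,2%nat,1%nat,0%nat);
  ((13942144)%Z,2%nat,1%nat,1%nat);
  ((32889664)%Z,2%nat,1%nat,2%nat);
  ((-208786432)%Z,2%nat,1%nat,3%nat);
  ((-445994496)%Z,2%nat,1%nat,4%nat);
  ((717009408)%Z,2%nat,1%nat,5%nat);
  ((-1466394624)%Z,2%nat,1%nat,6%nat);
  ((-512)%Z,2%nat,2%nat,0%nat);
  ((205824)%Z,2%nat,2%nat,1%nat);
  ((-685056)%Z,2%nat,2%nat,2%nat);
  ((21050880)%Z,2%nat,2%nat,3%nat);
  ((-128263680)%Z,2%nat,2%nat,4%nat);
  ((11358720)%Z,2%nat,2%nat,5%nat);
  ((-144912384)%Z,2%nat,2%nat,6%nat);
  ((2048)%Z,2%nat,3%nat,2%nat);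
  ((-8192)%Z,2%nat,3%nat,3%nat);
  ((20480)%Z,2%nat,3%nat,4%nat);
  ((-24576)%Z,2%nat,3%nat,5%nat);
  ((10240)%Z,2%nat,3%nat,6%nat);
  ((302672)%Z,3%nat,0%nat,0%nat);
  ((11988368)%Z,3%nat,0%nat,1%nat);
  ((48318624)%Z,3%nat,0%nat,2%nat);
  ((-284021760)%Z,3%nat,0%nat,3%nat);
  ((-15485184)%Z,3%nat,0%nat,4%nat);
  ((687241728)%Z,3%nat,0%nat,5%nat);
  ((-829670400)%Z,3%nat,0%nat,6%nat);
  ((98432)%Z,3%nat,1%nat,0%nat);
  ((4010624)%Z,3%nat,1%nat,1%nat);
  ((15345280)%Z,3%nat,1%nat,2%nat);
  ((-77623936)%Z,3%nat,1%nat,3%nat);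
  ((-82844416)%Z,3%nat,1%nat,4%nat);
  ((236433408)%Z,3%nat,1%nat,5%nat);
  ((-367660032)%Z,3%nat,1%nat,6%nat);
  ((24064)%Z,3%nat,2%nat,1%nat);
  ((-182784)%Z,3%nat,2%nat,2%nat);
  ((5431808)%Z,3%nat,2%nat,3%nat);
  ((-25931264)%Z,3%nat,2%nat,4%nat);
  ((2627584)%Z,3%nat,2%nat,5%nat);
  ((-30367744)%Z,3%nat,2%nat,6%nat);
  ((44608)%Z,4%nat,0%nat,0%nat);
  ((2086480)%Z,4%nat,0%nat,1%nat);
  ((12335792)%Z,4%nat,0%nat,2%nat);
  ((-59823456)%Z,4%nat,0%nat,3%nat);
  ((-1432480)%Z,4%nat,0%nat,4%nat);
  ((143697024)%Z,4%nat,0%nat,5%nat);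
  ((-139894272)%Z,4%nat,0%nat,6%nat);
  ((14688)%Z,4%nat,1%nat,0%nat);
  ((691840)%Z,4%nat,1%nat,1%nat);
  ((3972576)%Z,4%nat,1%nat,2%nat);
  ((-17580224)%Z,4%nat,1%nat,3%nat);
  ((-9244928)%Z,4%nat,1%nat,4%nat);
  ((48784896)%Z,4%nat,1%nat,5%nat);
  ((-57328128)%Z,4%nat,1%nat,6%nat);
  ((1024)%Z,4%nat,2%nat,1%nat);
  ((-33792)%Z,4%nat,2%nat,2%nat);
  ((749056)%Z,4%nat,2%nat,3%nat);
  ((-2930688)%Z,4%nat,2%nat,4%nat);
  ((324096)%Z,4%nat,2%nat,5%nat);
  ((-3565568)%Z,4%nat,2%nat,6%nat);
  ((3280)%Z,5%nat,0%nat,0%nat);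
  ((215040)%Z,5%nat,0%nat,1%nat);
  ((1902400)%Z,5%nat,0%nat,2%nat);
  ((-7837296)%Z,5%nat,0%nat,3%nat);
  ((-785440)%Z,5%nat,0%nat,4%nat);
  ((19254912)%Z,5%nat,0%nat,5%nat);
  ((-15334656)%Z,5%nat,0%nat,6%nat);
  ((1088)%Z,5%nat,1%nat,0%nat);
  ((71264)%Z,5%nat,1%nat,1%nat);
  ((620192)%Z,5%nat,1%nat,2%nat);
  ((-2442464)%Z,5%nat,1%nat,3%nat);
  ((-785632)%Z,5%nat,1%nat,4%nat);
  ((6471296)%Z,5%nat,1%nat,5%nat);
  ((-5778944)%Z,5%nat,1%nat,6%nat);
  ((-3328)%Z,5%nat,2%nat,2%nat);
  ((53248)%Z,5%nat,2%nat,3%nat);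
  ((-175616)%Z,5%nat,2%nat,4%nat);
  ((20480)%Z,5%nat,2%nat,5%nat);
  ((-222464)%Z,5%nat,2%nat,6%nat);
  ((96)%Z,6%nat,0%nat,0%nat);
  ((12128)%Z,6%nat,0%nat,1%nat);
  ((175776)%Z,6%nat,0%nat,2%nat);
  ((-619664)%Z,6%nat,0%nat,3%nat);
  ((-169072)%Z,6%nat,0%nat,4%nat);
  ((1615616)%Z,6%nat,0%nat,5%nat);
  ((-1079424)%Z,6%nat,0%nat,6%nat);
  ((32)%Z,6%nat,1%nat,0%nat);
  ((4032)%Z,6%nat,1%nat,1%nat);
  ((57984)%Z,6%nat,1%nat,2%nat);
  ((-201440)%Z,6%nat,1%nat,3%nat);
  ((-69216)%Z,6%nat,1%nat,4%nat);
  ((539616)%Z,6%nat,1%nat,5%nat);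
  ((-377088)%Z,6%nat,1%nat,6%nat);
  ((-128)%Z,6%nat,2%nat,2%nat);
  ((1536)%Z,6%nat,2%nat,3%nat);
  ((-4352)%Z,6%nat,2%nat,4%nat);
  ((512)%Z,6%nat,2%nat,5%nat);
  ((-5760)%Z,6%nat,2%nat,6%nat);
  ((288)%Z,7%nat,0%nat,1%nat);
  ((8944)%Z,7%nat,0%nat,2%nat);
  ((-26816)%Z,7%nat,0%nat,3%nat);
  ((-14896)%Z,7%nat,0%nat,4%nat);
  ((77600)%Z,7%nat,0%nat,5%nat);
  ((-45120)%Z,7%nat,0%nat,6%nat);
  ((96)%Z,7%nat,1%nat,1%nat);
  ((2976)%Z,7%nat,1%nat,2%nat);
  ((-8928)%Z,7%nat,1%nat,3%nat);
  ((-4960)%Z,7%nat,1%nat,4%nat);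
  ((25856)%Z,7%nat,1%nat,5%nat);
  ((-15040)%Z,7%nat,1%nat,6%nat);
  ((192)%Z,8%nat,0%nat,2%nat);
  ((-480)%Z,8%nat,0%nat,3%nat);
  ((-480)%Z,8%nat,0%nat,4%nat);
  ((1632)%Z,8%nat,0%nat,5%nat);
  ((-864)%Z,8%nat,0%nat,6%nat);
  ((64)%Z,8%nat,1%nat,2%nat);
  ((-160)%Z,8%nat,1%nat,3%nat);
  ((-160)%Z,8%nat,1%nat,4%nat);
  ((544)%Z,8%nat,1%nat,5%nat);
  ((-288)%Z,8%nat,1%nat,6%nat)].
Definition LI : list mono := [
  ((-2264640)%Z,0%nat,0%nat,1%nat);
  ((-104030616)%Z,0%nat,0%nat,2%nat);
  ((158515632)%Z,0%nat,0%nat,3%nat);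
  ((-2441935800)%Z,0%nat,0%nat,4%nat);
  ((10140339456)%Z,0%nat,0%nat,5%nat);
  ((-5670628128)%Z,0%nat,0%nat,6%nat);
  ((-294784)%Z,0%nat,1%nat,0%nat);
  ((-2359168)%Z,0%nat,1%nat,1%nat);
  ((-36910480)%Z,0%nat,1%nat,2%nat);
  ((45917472)%Z,0%nat,1%nat,3%nat);
  ((-742175184)%Z,0%nat,1%nat,4%nat);
  ((3365733888)%Z,0%nat,1%nat,5%nat);
  ((-1921828032)%Z,0%nat,1%nat,6%nat);
  ((-448)%Z,0%nat,2%nat,1%nat);
  ((-16728)%Z,0%nat,2%nat,2%nat);
  ((32304)%Z,0%nat,2%nat,3%nat);
  ((-73208)%Z,0%nat,2%nat,4%nat);
  ((-13056)%Z,0%nat,2%nat,5%nat);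
  ((71136)%Z,0%nat,2%nat,6%nat);
  ((-2048)%Z,0%nat,3%nat,2%nat);
  ((8192)%Z,0%nat,3%nat,3%nat);
  ((-12288)%Z,0%nat,3%nat,4%nat);
  ((8192)%Z,0%nat,3%nat,5%nat);
  ((-2048)%Z,0%nat,3%nat,6%nat);
  ((-78400)%Z,1%nat,0%nat,0%nat);
  ((375304)%Z,1%nat,0%nat,1%nat);
  ((-101016456)%Z,1%nat,0%nat,2%nat);
  ((173246856)%Z,1%nat,0%nat,3%nat);
  ((-3903221304)%Z,1%nat,0%nat,4%nat);
  ((12869149392)%Z,1%nat,0%nat,5%nat);
  ((-7156554336)%Z,1%nat,0%nat,6%nat);
  ((-209664)%Z,1%nat,1%nat,0%nat);
  ((-821200)%Z,1%nat,1%nat,1%nat);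
  ((-35293360)%Z,1%nat,1%nat,2%nat);
  ((39632048)%Z,1%nat,1%nat,3%nat);
  ((-1216647888)%Z,1%nat,1%nat,4%nat);
  ((4279145952)%Z,1%nat,1%nat,5%nat);
  ((-2425158720)%Z,1%nat,1%nat,6%nat);
  ((-120)%Z,1%nat,2%nat,1%nat);
  ((1720)%Z,1%nat,2%nat,2%nat);
  ((-24760)%Z,1%nat,2%nat,3%nat);
  ((23944)%Z,1%nat,2%nat,4%nat);
  ((-58288)%Z,1%nat,2%nat,5%nat);
  ((57504)%Z,1%nat,2%nat,6%nat);
  ((-49056)%Z,2%nat,0%nat,0%nat);
  ((1043768)%Z,2%nat,0%nat,1%nat);
  ((-39768292)%Z,2%nat,0%nat,2%nat);
  ((119849712)%Z,2%nat,0%nat,3%nat);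
  ((-2598459600)%Z,2%nat,0%nat,4%nat);
  ((7160783112)%Z,2%nat,0%nat,5%nat);
  ((-3934738908)%Z,2%nat,0%nat,6%nat);
  ((-54400)%Z,2%nat,1%nat,0%nat);
  ((291920)%Z,2%nat,1%nat,1%nat);
  ((-13185624)%Z,2%nat,1%nat,2%nat);
  ((25387808)%Z,2%nat,1%nat,3%nat);
  ((-823457632)%Z,2%nat,1%nat,4%nat);
  ((2385533616)%Z,2%nat,1%nat,5%nat);
  ((-1333269480)%Z,2%nat,1%nat,6%nat);
  ((-8)%Z,2%nat,2%nat,1%nat);
  ((540)%Z,2%nat,2%nat,2%nat);
  ((-5520)%Z,2%nat,2%nat,3%nat);
  ((5808)%Z,2%nat,2%nat,4%nat);
  ((-14648)%Z,2%nat,2%nat,5%nat);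
  ((13828)%Z,2%nat,2%nat,6%nat);
  ((-13920)%Z,3%nat,0%nat,0%nat);
  ((339584)%Z,3%nat,0%nat,1%nat);
  ((-8496572)%Z,3%nat,0%nat,2%nat);
  ((56953312)%Z,3%nat,0%nat,3%nat);
  ((-957087432)%Z,3%nat,0%nat,4%nat);
  ((2281258656)%Z,3%nat,0%nat,5%nat);
  ((-1230783516)%Z,3%nat,0%nat,6%nat);
  ((-6144)%Z,3%nat,1%nat,0%nat);
  ((200320)%Z,3%nat,1%nat,1%nat);
  ((-2417640)%Z,3%nat,1%nat,2%nat);
  ((13125568)%Z,3%nat,1%nat,3%nat);
  ((-306916272)%Z,3%nat,1%nat,4%nat);
  ((761433792)%Z,3%nat,1%nat,5%nat);
  ((-417021288)%Z,3%nat,1%nat,6%nat);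
  ((68)%Z,3%nat,2%nat,2%nat);
  ((-544)%Z,3%nat,2%nat,3%nat);
  ((632)%Z,3%nat,2%nat,4%nat);
  ((-1632)%Z,3%nat,2%nat,5%nat);
  ((1476)%Z,3%nat,2%nat,6%nat);
  ((-2280)%Z,4%nat,0%nat,0%nat);
  ((34736)%Z,4%nat,0%nat,1%nat);
  ((-1205453)%Z,4%nat,0%nat,2%nat);
  ((17131884)%Z,4%nat,0%nat,3%nat);
  ((-215422614)%Z,4%nat,0%nat,4%nat);
  ((455010972)%Z,4%nat,0%nat,5%nat);
  ((-239520621)%Z,4%nat,0%nat,6%nat);
  ((-256)%Z,4%nat,1%nat,0%nat);
  ((40960)%Z,4%nat,1%nat,1%nat);
  ((-228846)%Z,4%nat,1%nat,2%nat);
  ((4342408)%Z,4%nat,1%nat,3%nat);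
  ((-69713124)%Z,4%nat,1%nat,4%nat);
  ((152168040)%Z,4%nat,1%nat,5%nat);
  ((-81153310)%Z,4%nat,1%nat,6%nat);
  ((3)%Z,4%nat,2%nat,2%nat);
  ((-20)%Z,4%nat,2%nat,3%nat);
  ((26)%Z,4%nat,2%nat,4%nat);
  ((-68)%Z,4%nat,2%nat,5%nat);
  ((59)%Z,4%nat,2%nat,6%nat);
  ((-208)%Z,5%nat,0%nat,0%nat);
  ((-1456)%Z,5%nat,0%nat,1%nat);
  ((-148080)%Z,5%nat,0%nat,2%nat);
  ((3158704)%Z,5%nat,0%nat,3%nat);
  ((-30528576)%Z,5%nat,0%nat,4%nat);
  ((58172288)%Z,5%nat,0%nat,5%nat);
  ((-29690112)%Z,5%nat,0%nat,6%nat);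
  ((3712)%Z,5%nat,1%nat,1%nat);
  ((-14720)%Z,5%nat,1%nat,2%nat);
  ((858240)%Z,5%nat,1%nat,3%nat);
  ((-9952640)%Z,5%nat,1%nat,4%nat);
  ((19492608)%Z,5%nat,1%nat,5%nat);
  ((-10059520)%Z,5%nat,1%nat,6%nat);
  ((-8)%Z,6%nat,0%nat,0%nat);
  ((-488)%Z,6%nat,0%nat,1%nat);
  ((-16608)%Z,6%nat,0%nat,2%nat);
  ((346488)%Z,6%nat,0%nat,3%nat);
  ((-2671176)%Z,6%nat,0%nat,4%nat);
  ((4654560)%Z,6%nat,0%nat,5%nat);
  ((-2288704)%Z,6%nat,0%nat,6%nat);
  ((128)%Z,6%nat,1%nat,1%nat);
  ((-1728)%Z,6%nat,1%nat,2%nat);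
  ((98816)%Z,6%nat,1%nat,3%nat);
  ((-876288)%Z,6%nat,1%nat,4%nat);
  ((1562752)%Z,6%nat,1%nat,5%nat);
  ((-775488)%Z,6%nat,1%nat,6%nat);
  ((-24)%Z,7%nat,0%nat,1%nat);
  ((-1240)%Z,7%nat,0%nat,2%nat);
  ((20808)%Z,7%nat,0%nat,3%nat);
  ((-132328)%Z,7%nat,0%nat,4%nat);
  ((213072)%Z,7%nat,0%nat,5%nat);
  ((-100288)%Z,7%nat,0%nat,6%nat);
  ((-192)%Z,7%nat,1%nat,2%nat);
  ((6144)%Z,7%nat,1%nat,3%nat);
  ((-43648)%Z,7%nat,1%nat,4%nat);
  ((71680)%Z,7%nat,1%nat,5%nat);
  ((-33984)%Z,7%nat,1%nat,6%nat);
  ((-40)%Z,8%nat,0%nat,2%nat);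
  ((528)%Z,8%nat,0%nat,3%nat);
  ((-2848)%Z,8%nat,0%nat,4%nat);
  ((4272)%Z,8%nat,0%nat,5%nat);
  ((-1912)%Z,8%nat,0%nat,6%nat);
  ((-8)%Z,8%nat,1%nat,2%nat);
  ((160)%Z,8%nat,1%nat,3%nat);
  ((-944)%Z,8%nat,1%nat,4%nat);
  ((1440)%Z,8%nat,1%nat,5%nat);
  ((-648)%Z,8%nat,1%nat,6%nat)].
Definition LA4 : list mono := [
  ((294784)%Z,0%nat,0%nat,0%nat);
  ((2356480)%Z,0%nat,0%nat,1%nat);
  ((36865408)%Z,0%nat,0%nat,2%nat);
  ((-45944832)%Z,0%nat,0%nat,3%nat);
  ((742067712)%Z,0%nat,0%nat,4%nat);
  ((-3366033408)%Z,0%nat,0%nat,5%nat);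
  ((1922310144)%Z,0%nat,0%nat,6%nat);
  ((209664)%Z,1%nat,0%nat,0%nat);
  ((820480)%Z,1%nat,0%nat,1%nat);
  ((35303680)%Z,1%nat,0%nat,2%nat);
  ((-39780608)%Z,1%nat,0%nat,3%nat);
  ((1216791552)%Z,1%nat,0%nat,4%nat);
  ((-4279495680)%Z,1%nat,0%nat,5%nat);
  ((2425503744)%Z,1%nat,0%nat,6%nat);
  ((54400)%Z,2%nat,0%nat,0%nat);
  ((-291968)%Z,2%nat,0%nat,1%nat);
  ((13188864)%Z,2%nat,0%nat,2%nat);
  ((-25420928)%Z,2%nat,0%nat,3%nat);
  ((823492480)%Z,2%nat,0%nat,4%nat);
  ((-2385621504)%Z,2%nat,0%nat,5%nat);
  ((1333352448)%Z,2%nat,0%nat,6%nat);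
  ((6144)%Z,3%nat,0%nat,0%nat);
  ((-200320)%Z,3%nat,0%nat,1%nat);
  ((2418048)%Z,3%nat,0%nat,2%nat);
  ((-13128832)%Z,3%nat,0%nat,3%nat);
  ((306920064)%Z,3%nat,0%nat,4%nat);
  ((-761443584)%Z,3%nat,0%nat,5%nat);
  ((417030144)%Z,3%nat,0%nat,6%nat);
  ((256)%Z,4%nat,0%nat,0%nat);
  ((-40960)%Z,4%nat,0%nat,1%nat);
  ((228864)%Z,4%nat,0%nat,2%nat);
  ((-4342528)%Z,4%nat,0%nat,3%nat);
  ((69713280)%Z,4%nat,0%nat,4%nat);
  ((-152168448)%Z,4%nat,0%nat,5%nat);
  ((81153664)%Z,4%nat,0%nat,6%nat);
  ((-3712)%Z,5%nat,0%nat,1%nat);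
  ((14720)%Z,5%nat,0%nat,2%nat);
  ((-858240)%Z,5%nat,0%nat,3%nat);
  ((9952640)%Z,5%nat,0%nat,4%nat);
  ((-19492608)%Z,5%nat,0%nat,5%nat);
  ((10059520)%Z,5%nat,0%nat,6%nat);
  ((-128)%Z,6%nat,0%nat,1%nat);
  ((1728)%Z,6%nat,0%nat,2%nat);
  ((-98816)%Z,6%nat,0%nat,3%nat);
  ((876288)%Z,6%nat,0%nat,4%nat);
  ((-1562752)%Z,6%nat,0%nat,5%nat);
  ((775488)%Z,6%nat,0%nat,6%nat);
  ((192)%Z,7%nat,0%nat,2%nat);
  ((-6144)%Z,7%nat,0%nat,3%nat);
  ((43648)%Z,7%nat,0%nat,4%nat);
  ((-71680)%Z,7%nat,0%nat,5%nat);
  ((33984)%Z,7%nat,0%nat,6%nat);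
  ((8)%Z,8%nat,0%nat,2%nat);
  ((-160)%Z,8%nat,0%nat,3%nat);
  ((944)%Z,8%nat,0%nat,4%nat);
  ((-1440)%Z,8%nat,0%nat,5%nat);
  ((648)%Z,8%nat,0%nat,6%nat)].
Definition LBR : list mono := [
  ((448)%Z,0%nat,0%nat,0%nat);
  ((-1256)%Z,0%nat,0%nat,1%nat);
  ((40168)%Z,0%nat,0%nat,2%nat);
  ((2784)%Z,0%nat,0%nat,3%nat);
  ((89568)%Z,0%nat,0%nat,4%nat);
  ((120)%Z,1%nat,0%nat,0%nat);
  ((-1600)%Z,1%nat,0%nat,1%nat);
  ((23160)%Z,1%nat,0%nat,2%nat);
  ((-784)%Z,1%nat,0%nat,3%nat);
  ((57504)%Z,1%nat,0%nat,4%nat);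
  ((8)%Z,2%nat,0%nat,0%nat);
  ((-532)%Z,2%nat,0%nat,1%nat);
  ((4988)%Z,2%nat,0%nat,2%nat);
  ((-820)%Z,2%nat,0%nat,3%nat);
  ((13828)%Z,2%nat,0%nat,4%nat);
  ((-68)%Z,3%nat,0%nat,1%nat);
  ((476)%Z,3%nat,0%nat,2%nat);
  ((-156)%Z,3%nat,0%nat,3%nat);
  ((1476)%Z,3%nat,0%nat,4%nat);
  ((-3)%Z,4%nat,0%nat,1%nat);
  ((17)%Z,4%nat,0%nat,2%nat);
  ((-9)%Z,4%nat,0%nat,3%nat);
  ((59)%Z,4%nat,0%nat,4%nat)].
Definition Rp m e x := - a1 m e * x^3 + a3 m e * x^2 - a5 m e * x + a7 m e.
Definition Ip m e x := - a0 m e * x^3 + a2 m e * x^2 - a4 m e * x + a6 m e.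
Definition br m e := e*(59*e^3-9*e^2+17*e-3)*m^4
            + 4*e*(15*e^3+15*e^2+17*e+1)*m^3
            + 4*(e+2)*(e^3+9*e^2+5*e+1)*m^2
            - 8*(2*e^3-3*e^2-4*e-3)*m
            - 8*(e-1)*(e+2).
Lemma a2_br m e : a2 m e = (e^2-e) * br m e.
Proof. reflexivity. Qed.
Lemma LR_ok u v e : Rp (6+u) e (3+v) = ev LR u v e.
Proof. unfold Rp, a1, a3, a5, a7. cbv [ev evm LR]. ring. Qed.
Lemma LI_ok u v e : Ip (6+u) e (3+v) = ev LI u v e.
Proof. unfold Ip, a0, a2, a4, a6. cbv [ev evm LI]. ring. Qed.
Lemma LA4_ok u v e : a4 (6+u) e = ev LA4 u v e.
Proof. unfold a4. cbv [ev evm LA4]. ring. Qed.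
Lemma LBR_ok u v e : br (6+u) e = ev LBR u v e.
Proof. unfold br. cbv [ev evm LBR]. ring. Qed.


Definition dQ : Q := 1#1000.
Definition eQ : Q := 1#1000000.
Lemma dQ_R : Q2R dQ = /1000. Proof. unfold Q2R, dQ; simpl; field. Qed.
Lemma eQ_R : Q2R eQ = /1000000. Proof. unfold Q2R, eQ; simpl; field. Qed.
Lemma Q0_R : Q2R 0 = 0. Proof. apply Q2R_0. Qed.

Ltac qnum := apply Qle_Rle; apply Qle_bool_imp_le; vm_compute; reflexivity.
Lemma Q2R_int (z : Z) : Q2R (z # 1) = IZR z. Proof. unfold Q2R; simpl; field. Qed.

Lemma numA : lsum (fun t => bumR t (/1000) (/1000) (/1000000)) LR <= 2600.
Proof. rewrite <- dQ_R, <- eQ_R, <- (Q2R_lsum (fun t => bumQ t dQ dQ eQ)) by (intro; apply Q2R_bum).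
  rewrite <- (Q2R_int 2600). qnum. Qed.
Lemma numB : lsum (fun t => bvmR t (/1000) (/1000) (/1000000)) LR <= 500.
Proof. rewrite <- dQ_R, <- eQ_R, <- (Q2R_lsum (fun t => bvmQ t dQ dQ eQ)) by (intro; apply Q2R_bvm).
  rewrite <- (Q2R_int 500). qnum. Qed.
Lemma numC : lsum (fun t => bumR t (/1000) (/1000) (/1000000)) LI <= 350.
Proof. rewrite <- dQ_R, <- eQ_R, <- (Q2R_lsum (fun t => bumQ t dQ dQ eQ)) by (intro; apply Q2R_bum).
  rewrite <- (Q2R_int 350). qnum. Qed.
Lemma numD : lsum (fun t => bvmR t (/1000) (/1000) (/1000000)) LI <= 250.
Proof. rewrite <- dQ_R, <- eQ_R, <- (Q2R_lsum (fun t => bvmQ t dQ dQ eQ)) by (intro; apply Q2R_bvm).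
  rewrite <- (Q2R_int 250). qnum. Qed.
Lemma numER : lsum (fun t => abmR t 0 0 (/1000000)) (eshift LR) <= 58875300.
Proof. rewrite <- Q0_R, <- eQ_R, <- (Q2R_lsum (fun t => abmQ t 0 0 eQ)) by (intro; apply Q2R_abm).
  rewrite <- (Q2R_int 58875300). qnum. Qed.
Lemma numEI : lsum (fun t => abmR t 0 0 (/1000000)) (eshift LI) <= 2270000.
Proof. rewrite <- Q0_R, <- eQ_R, <- (Q2R_lsum (fun t => abmQ t 0 0 eQ)) by (intro; apply Q2R_abm).
  rewrite <- (Q2R_int 2270000). qnum. Qed.
Lemma numA4 : lsum (fun t => vbmR t (/1000) 0 (/1000000)) LA4 <= 1000.
Proof. rewrite <- Q0_R, <- dQ_R, <- eQ_R, <- (Q2R_lsum (fun t => vbmQ t dQ 0 eQ)) by (intro; apply Q2R_vbm).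
  rewrite <- (Q2R_int 1000). qnum. Qed.
Lemma numBR : lsum (fun t => vbmR t (/1000) 0 (/1000000)) LBR <= 100.
Proof. rewrite <- Q0_R, <- dQ_R, <- eQ_R, <- (Q2R_lsum (fun t => vbmQ t dQ 0 eQ)) by (intro; apply Q2R_vbm).
  rewrite <- (Q2R_int 100). qnum. Qed.

Lemma cA : csum is100 LR = 1401792%Z. Proof. vm_compute. reflexivity. Qed.
Lemma cB : csum is010 LR = (-150528)%Z. Proof. vm_compute. reflexivity. Qed.
Lemma cC : csum is100 LI = (-78400)%Z. Proof. vm_compute. reflexivity. Qed.
Lemma cD : csum is010 LI = (-294784)%Z. Proof. vm_compute. reflexivity. Qed.
Lemma c0R : csum is000 LR = 0%Z. Proof. vm_compute. reflexivity. Qed.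
Lemma c0I : csum is000 LI = 0%Z. Proof. vm_compute. reflexivity. Qed.
Lemma c0A4 : csum is000 LA4 = 294784%Z. Proof. vm_compute. reflexivity. Qed.
Lemma c0BR : csum is000 LBR = 448%Z. Proof. vm_compute. reflexivity. Qed.


Lemma ab_iv x a b : Rabs (x - a) <= b -> a - b <= x <= a + b.
Proof. intros H; pose proof (Rle_abs (x-a)); pose proof (Rle_abs (-(x-a))); rewrite Rabs_Ropp in *; lra. Qed.
Lemma ab0 x b : Rabs x <= b -> -b <= x <= b.
Proof. intros H; pose proof (Rle_abs x); pose proof (Rle_abs (-x)); rewrite Rabs_Ropp in *; lra. Qed.
Lemma iv_ab x b : -b <= x <= b -> Rabs x <= b.
Proof. intros; apply Rabs_le; lra. Qed.

Definition box u v e := Rabs u <= /1000 /\ Rabs v <= /1000 /\ 0 <= e <= /1000000.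

Lemma DDR u1 v1 u2 v2 e : box u1 v1 e -> box u2 v2 e -> exists G1 G2,
  Rp (6+u2) e (3+v2) - Rp (6+u1) e (3+v1) = (u2-u1)*G1 + (v2-v1)*G2 /\
  1399192 <= G1 <= 1404392 /\ -151028 <= G2 <= -150028.
Proof.
  intros [H1 [H2 H3]] [H4 [H5 H6]].
  assert (He : Rabs e <= /1000000) by (apply iv_ab; lra).
  rewrite !LR_ok.
  destruct (ev_DD (/1000) (/1000) (/1000000) u1 v1 u2 v2 e H1 H4 H2 H5 He LR) as [G1 [G2 [E [B1 B2]]]].
  exists G1, G2. split; [exact E|].
  pose proof numA; pose proof numB. rewrite cA in B1; rewrite cB in B2.
  apply ab_iv in B1; apply ab_iv in B2. split; lra.
Qed.

Lemma DDI u1 v1 u2 v2 e : box u1 v1 e -> box u2 v2 e -> exists G3 G4,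
  Ip (6+u2) e (3+v2) - Ip (6+u1) e (3+v1) = (u2-u1)*G3 + (v2-v1)*G4 /\
  -78750 <= G3 <= -78050 /\ -295034 <= G4 <= -294534.
Proof.
  intros [H1 [H2 H3]] [H4 [H5 H6]].
  assert (He : Rabs e <= /1000000) by (apply iv_ab; lra).
  rewrite !LI_ok.
  destruct (ev_DD (/1000) (/1000) (/1000000) u1 v1 u2 v2 e H1 H4 H2 H5 He LI) as [G1 [G2 [E [B1 B2]]]].
  exists G1, G2. split; [exact E|].
  pose proof numC; pose proof numD. rewrite cC in B1; rewrite cD in B2.
  apply ab_iv in B1; apply ab_iv in B2. split; lra.
Qed.

Lemma R0b e : 0 <= e <= /1000000 -> Rabs (Rp 6 e 3) <= 58875300 * e.
Proof.
  intros He. replace (Rp 6 e 3) with (Rp (6+0) e (3+0)) by (f_equal; ring).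
  rewrite LR_ok, ev_eshift, c0R.
  assert (Hb := ev_ab 0 0 (/1000000) 0 0 e ltac:(rewrite Rabs_R0; lra) ltac:(rewrite Rabs_R0; lra)
     ltac:(apply iv_ab; lra) (eshift LR)).
  pose proof numER. rewrite Rplus_0_l, Rabs_mult, (Rabs_right e) by lra.
  rewrite Rmult_comm. apply Rmult_le_compat_r; lra.
Qed.

Lemma I0b e : 0 <= e <= /1000000 -> Rabs (Ip 6 e 3) <= 2270000 * e.
Proof.
  intros He. replace (Ip 6 e 3) with (Ip (6+0) e (3+0)) by (f_equal; ring).
  rewrite LI_ok, ev_eshift, c0I.
  assert (Hb := ev_ab 0 0 (/1000000) 0 0 e ltac:(rewrite Rabs_R0; lra) ltac:(rewrite Rabs_R0; lra)
     ltac:(apply iv_ab; lra) (eshift LI)).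
  pose proof numEI. rewrite Rplus_0_l, Rabs_mult, (Rabs_right e) by lra.
  rewrite Rmult_comm. apply Rmult_le_compat_r; lra.
Qed.

Lemma a4pos u e : Rabs u <= /1000 -> 0 <= e <= /1000000 -> 0 < a4 (6+u) e.
Proof.
  intros Hu He. rewrite (LA4_ok u 0 e).
  assert (Hb := ev_vb (/1000) 0 (/1000000) u 0 e Hu ltac:(rewrite Rabs_R0; lra) ltac:(apply iv_ab; lra) LA4).
  rewrite c0A4 in Hb. pose proof numA4. apply ab_iv in Hb. lra.
Qed.

Lemma brpos u e : Rabs u <= /1000 -> 0 <= e <= /1000000 -> 0 < br (6+u) e.
Proof.
  intros Hu He. rewrite (LBR_ok u 0 e).
  assert (Hb := ev_vb (/1000) 0 (/1000000) u 0 e Hu ltac:(rewrite Rabs_R0; lra) ltac:(apply iv_ab; lra) LBR).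
  rewrite c0BR in Hb. pose proof numBR. apply ab_iv in Hb. lra.
Qed.

Lemma a0nn m e : 0 <= a0 m e.
Proof.
  unfold a0. replace ((e-1)^4) with (((e-1)^2)^2) by ring.
  assert (0 <= ((e-1)^2)^2) by apply pow2_ge_0. assert (0 <= e^2) by apply pow2_ge_0.
  assert (0 < 2^11) by (apply pow_lt; lra).
  apply Rmult_le_pos; [apply Rmult_le_pos|]; lra.
Qed.

Lemma Ip_decr u e x y : Rabs u <= /1000 -> 0 < e <= /1000000 -> 0 <= x -> x < y ->
  Ip (6+u) e y < Ip (6+u) e x.
Proof.
  intros Hu He Hx Hxy.
  pose proof (a4pos u e Hu ltac:(lra)) as H4.
  pose proof (brpos u e Hu ltac:(lra)) as Hb.
  pose proof (a0nn (6+u) e) as H0.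
  assert (H2 : a2 (6+u) e <= 0).
  { rewrite a2_br. assert (e^2 - e < 0) by nra. nra. }
  unfold Ip.
  assert (E3 : y^3 - x^3 = (y-x)*(y*y+x*y+x*x)) by ring.
  assert (E2 : y^2 - x^2 = (y-x)*(y+x)) by ring.
  assert (P3 : 0 <= (y-x)*(y*y+x*y+x*x)) by (apply Rmult_le_pos; nra).
  assert (P2 : 0 <= (y-x)*(y+x)) by (apply Rmult_le_pos; nra).
  assert (Q3 : 0 <= a0 (6+u) e * (y^3 - x^3)) by (rewrite E3; apply Rmult_le_pos; lra).
  assert (Q2 : 0 <= (- a2 (6+u) e) * (y^2 - x^2)) by (rewrite E2; apply Rmult_le_pos; lra).
  assert (Q1 : 0 < a4 (6+u) e * (y - x)) by (apply Rmult_lt_0_compat; lra).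
  lra.
Qed.

Lemma det_bound G1 G2 G3 G4 : 1399192 <= G1 <= 1404392 -> -151028 <= G2 <= -150028 ->
  -78750 <= G3 <= -78050 -> -295034 <= G4 <= -294534 -> G1*G4 - G2*G3 <= -400000000000.
Proof. intros. nra. Qed.

Lemma Ip_sides u e : Rabs u <= /1000 -> 0 < e <= /1000000 ->
  0 < Ip (6+u) e (3 + - /1000) /\ Ip (6+u) e (3 + /1000) < 0.
Proof.
  intros Hu He. pose proof (I0b e ltac:(lra)) as HI. apply ab0 in HI.
  pose proof (ab0 _ _ Hu).
  split.
  - destruct (DDI 0 0 u (-/1000) e) as [G3 [G4 [E [B3 B4]]]].
    + unfold box; rewrite Rabs_R0; lra.
    + unfold box; split; [apply iv_ab; lra|]; split; [apply iv_ab; lra|lra].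
    + rewrite !Rplus_0_r in E. nra.
  - destruct (DDI 0 0 u (/1000) e) as [G3 [G4 [E [B3 B4]]]].
    + unfold box; rewrite Rabs_R0; lra.
    + unfold box; split; [apply iv_ab; lra|]; split; [apply iv_ab; lra|lra].
    + rewrite !Rplus_0_r in E. nra.
Qed.

Lemma LOC u e x : Rabs u <= /1000 -> 0 < e <= /1000000 -> 0 < x ->
  Ip (6+u) e x = 0 -> Rabs (x - 3) <= /1000.
Proof.
  intros Hu He Hx H0. destruct (Ip_sides u e Hu He) as [S1 S2].
  apply iv_ab. split.
  - destruct (Rle_lt_dec (3 + - /1000) x) as [h|h]; [lra|].
    pose proof (Ip_decr u e x (3 + - /1000) Hu He ltac:(lra) h). lra.
  - destruct (Rle_lt_dec x (3 + /1000)) as [h|h]; [lra|].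
    pose proof (Ip_decr u e (3 + /1000) x Hu He ltac:(lra) h). lra.
Qed.

Lemma UNIQ u1 v1 u2 v2 e : box u1 v1 e -> box u2 v2 e ->
  Rp (6+u1) e (3+v1) = 0 -> Ip (6+u1) e (3+v1) = 0 ->
  Rp (6+u2) e (3+v2) = 0 -> Ip (6+u2) e (3+v2) = 0 -> u1 = u2 /\ v1 = v2.
Proof.
  intros B1 B2 R1 I1 R2 I2.
  destruct (DDR u1 v1 u2 v2 e B1 B2) as [G1 [G2 [E1 [H1 H2]]]].
  destruct (DDI u1 v1 u2 v2 e B1 B2) as [G3 [G4 [E2 [H3 H4]]]].
  rewrite R1, R2 in E1. rewrite I1, I2 in E2.
  pose proof (det_bound G1 G2 G3 G4 H1 H2 H3 H4) as Hd.
  assert (Eu : (u2-u1)*(G1*G4 - G2*G3) = G4*((u2-u1)*G1 + (v2-v1)*G2) - G2*((u2-u1)*G3 + (v2-v1)*G4)) by ring.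
  rewrite <- E1, <- E2 in Eu.
  assert (Hu : u2 - u1 = 0).
  { assert (Z : (u2-u1)*(G1*G4 - G2*G3) = 0) by lra.
    apply Rmult_integral in Z. destruct Z; [assumption|lra]. }
  assert (Z : (v2-v1)*G4 = 0) by (rewrite Hu in E2; lra).
  apply Rmult_integral in Z. destruct Z; lra.
Qed.

Lemma KEY u v e : box u v e -> 0 < e -> Ip (6+u) e (3+v) = 0 ->
  exists G3 G4 D K, -78750 <= G3 <= -78050 /\ -295034 <= G4 <= -294534 /\ D <= -400000000000 /\
    Rabs K <= 17800000000000 * e /\
    Rp (6+u) e (3+v) * G4 = K + u * D /\ - Ip 6 e 3 = u*G3 + v*G4.
Proof.
  intros B He I0.
  assert (B0 : box 0 0 e) by (destruct B as [_ [_ h]]; unfold box; rewrite Rabs_R0; lra).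
  destruct (DDR 0 0 u v e B0 B) as [G1 [G2 [E1 [H1 H2]]]].
  destruct (DDI 0 0 u v e B0 B) as [G3 [G4 [E2 [H3 H4]]]].
  rewrite !Rplus_0_r, !Rminus_0_r in E1, E2. rewrite I0 in E2.
  exists G3, G4, (G1*G4 - G2*G3), (Rp 6 e 3 * G4 - G2 * Ip 6 e 3).
  destruct B as [_ [_ He']].
  split; [lra|]. split; [lra|]. split; [apply det_bound; lra|].
  split; [|split; [|lra]].
  - pose proof (R0b e He') as HR. pose proof (I0b e He') as HI.
    eapply Rle_trans; [apply Rabs_triang|]. rewrite Rabs_Ropp, !Rabs_mult.
    assert (A4 : Rabs G4 <= 295034) by (apply iv_ab; lra).
    assert (A2 : Rabs G2 <= 151028) by (apply iv_ab; lra).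
    assert (P1 : Rabs (Rp 6 e 3) * Rabs G4 <= 58875300 * e * 295034)
      by (apply Rmult_le_compat; try apply Rabs_pos; lra).
    assert (P2 : Rabs G2 * Rabs (Ip 6 e 3) <= 151028 * (2270000 * e))
      by (apply Rmult_le_compat; try apply Rabs_pos; lra).
    lra.
  - assert (Ex : Rp (6 + u) e (3 + v) = Rp 6 e 3 + (u*G1 + v*G2)) by lra.
    rewrite Ex.
    assert (Ev : v * G4 = - Ip 6 e 3 - u * G3) by lra.
    replace ((Rp 6 e 3 + (u * G1 + v * G2)) * G4) with (Rp 6 e 3 * G4 + u*G1*G4 + G2*(v*G4)) by ring.
    rewrite Ev. ring.
Qed.

Lemma BND u v e : box u v e -> 0 < e -> Rp (6+u) e (3+v) = 0 -> Ip (6+u) e (3+v) = 0 ->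
  Rabs u <= 50 * e /\ Rabs v <= 50 * e.
Proof.
  intros B He R0 I0.
  destruct (KEY u v e B He I0) as [G3 [G4 [D [K [H3 [H4 [HD [HK [E1 E2]]]]]]]]].
  rewrite R0 in E1.
  assert (Hu : Rabs u <= 50 * e).
  { assert (Equ : Rabs u * Rabs D = Rabs K) by (rewrite <- Rabs_mult; replace (u*D) with (-K) by lra; apply Rabs_Ropp).
    assert (Rabs D >= 400000000000) by (rewrite Rabs_left by lra; lra).
    assert (Rabs u * 400000000000 <= Rabs u * Rabs D) by (apply Rmult_le_compat_l; [apply Rabs_pos|lra]).
    lra. }
  split; [exact Hu|].
  destruct B as [_ [_ He']].
  pose proof (I0b e He') as HI.
  assert (Ev : Rabs v * Rabs G4 = Rabs (- Ip 6 e 3 - u * G3)) by (rewrite <- Rabs_mult; f_equal; lra).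
  assert (Hv : Rabs (- Ip 6 e 3 - u * G3) <= 2270000 * e + 50 * e * 78750).
  { unfold Rminus. eapply Rle_trans; [apply Rabs_triang|]. rewrite !Rabs_Ropp, Rabs_mult.
    assert (Rabs G3 <= 78750) by (apply iv_ab; lra).
    assert (Rabs u * Rabs G3 <= 50 * e * 78750) by (apply Rmult_le_compat; try apply Rabs_pos; lra).
    lra. }
  assert (Rabs G4 >= 294534) by (rewrite Rabs_left by lra; lra).
  assert (Rabs v * 294534 <= Rabs v * Rabs G4) by (apply Rmult_le_compat_l; [apply Rabs_pos|lra]).
  lra.
Qed.

Lemma lip_cont f K : 0 <= K -> (forall a b, Rabs (f a - f b) <= K * Rabs (a - b)) -> continuity f.
Proof.
  intros HK H x. unfold continuity_pt, continue_in, limit1_in, limit_in.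
  intros eps Heps. exists (eps/(K+1)). split.
  - apply Rdiv_lt_0_compat; lra.
  - intros y [_ Hy]. simpl in *. unfold R_dist in *.
    eapply Rle_lt_trans; [apply H|].
    assert (E : K*(eps/(K+1)) = eps - eps/(K+1)) by (field; lra).
    assert (P : 0 < eps/(K+1)) by (apply Rdiv_lt_0_compat; lra).
    assert (K * Rabs (y - x) <= K*(eps/(K+1))) by (apply Rmult_le_compat_l; lra).
    lra.
Qed.

Definition cl a := Rmax (-/1000) (Rmin (/1000) a).
Lemma cl_box a : Rabs (cl a) <= /1000.
Proof. unfold cl, Rmax, Rmin, Rabs; repeat (destruct Rle_dec || destruct Rcase_abs); lra. Qed.
Lemma cl_id a : Rabs a <= /1000 -> cl a = a.
Proof. intro H; apply ab0 in H. unfold cl, Rmax, Rmin; repeat (destruct Rle_dec); lra. Qed.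
Lemma cl_lip a b : Rabs (cl a - cl b) <= Rabs (a - b).
Proof. unfold cl, Rmax, Rmin, Rabs; repeat (destruct Rle_dec || destruct Rcase_abs); lra. Qed.

Lemma cont_Ip m e : continuity (fun v => - Ip m e (3+v)).
Proof. intro x. apply continuity_pt_filterlim. apply (ex_derive_continuous (fun v => - Ip m e (3+v))). unfold Ip, a0,a2,a4,a6. auto_derive. auto. Qed.

Lemma sideI u e : Rabs u <= /1000 -> 0 < e <= /1000000 ->
  exists v, Rabs v <= /1000 /\ Ip (6+u) e (3+v) = 0.
Proof.
  intros Hu He. destruct (Ip_sides u e Hu He) as [S1 S2].
  destruct (IVT (fun v => - Ip (6+u) e (3+v)) (-/1000) (/1000) (cont_Ip (6+u) e) ltac:(lra)
     ltac:(simpl; lra) ltac:(simpl; lra)) as [z [Hz Hz0]].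
  exists z. split; [apply iv_ab; lra | lra].
Qed.

Lemma EX e : 0 < e < /1000000 -> exists u v, box u v e /\
  Rp (6+u) e (3+v) = 0 /\ Ip (6+u) e (3+v) = 0.
Proof.
  intros He.
  set (xI := fun u => epsilon (inhabits 0) (fun v => Rabs v <= /1000 /\ Ip (6+u) e (3+v) = 0)).
  assert (HxI : forall u, Rabs u <= /1000 -> Rabs (xI u) <= /1000 /\ Ip (6+u) e (3 + xI u) = 0).
  { intros u Hu. unfold xI. apply epsilon_spec. apply sideI; lra. }
  assert (Bx : forall u, Rabs u <= /1000 -> box u (xI u) e).
  { intros u Hu. unfold box. split; [exact Hu|]. split; [apply HxI, Hu|lra]. }
  set (hc := fun a => Rp (6 + cl a) e (3 + xI (cl a))).
  assert (Hlip : forall a b, Rabs (hc a - hc b) <= 2000000 * Rabs (a - b)).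
  { intros a b. unfold hc.
    pose proof (cl_box a) as Ca. pose proof (cl_box b) as Cb. pose proof (cl_lip a b) as Cl.
    destruct (DDI (cl b) (xI (cl b)) (cl a) (xI (cl a)) e (Bx _ Cb) (Bx _ Ca)) as [G3 [G4 [E2 [H3 H4]]]].
    destruct (DDR (cl b) (xI (cl b)) (cl a) (xI (cl a)) e (Bx _ Cb) (Bx _ Ca)) as [G1 [G2 [E1 [H1 H2]]]].
    rewrite (proj2 (HxI _ Ca)), (proj2 (HxI _ Cb)) in E2.
    set (du := cl a - cl b) in *. set (dv := xI (cl a) - xI (cl b)) in *.
    assert (Hdv : Rabs dv <= Rabs du).
    { assert (Eqv : Rabs dv * Rabs G4 = Rabs du * Rabs G3)
        by (rewrite <- !Rabs_mult; replace (dv*G4) with (-(du*G3)) by lra; apply Rabs_Ropp).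
      assert (Rabs G3 <= 78750) by (apply iv_ab; lra).
      assert (Rabs G4 >= 294534) by (rewrite Rabs_left by lra; lra).
      assert (Rabs du * Rabs G3 <= Rabs du * 78750) by (apply Rmult_le_compat_l; [apply Rabs_pos|lra]).
      assert (Rabs dv * 294534 <= Rabs dv * Rabs G4) by (apply Rmult_le_compat_l; [apply Rabs_pos|lra]).
      pose proof (Rabs_pos du). lra. }
    rewrite E1. eapply Rle_trans; [apply Rabs_triang|]. rewrite !Rabs_mult.
    assert (Rabs G1 <= 1404392) by (apply iv_ab; lra).
    assert (Rabs G2 <= 151028) by (apply iv_ab; lra).
    assert (Rabs du * Rabs G1 <= Rabs du * 1404392) by (apply Rmult_le_compat_l; [apply Rabs_pos|lra]).
    assert (Rabs dv * Rabs G2 <= Rabs du * 151028) by (apply Rmult_le_compat; try apply Rabs_pos; lra).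
    pose proof (Rabs_pos du). lra. }
  assert (Hcont : continuity hc) by (apply (lip_cont hc 2000000); [lra|exact Hlip]).
  assert (Bd : Rabs (/1000) <= /1000) by (apply iv_ab; lra).
  assert (Bmd : Rabs (-/1000) <= /1000) by (apply iv_ab; lra).
  assert (Hpos : 0 < hc (/1000)).
  { unfold hc. rewrite cl_id by exact Bd.
    destruct (KEY _ _ e (Bx _ Bd) ltac:(lra) (proj2 (HxI _ Bd))) as [G3 [G4 [D [K [H3 [H4 [HD [HK [E1 E2]]]]]]]]].
    apply ab0 in HK.
    destruct (Rle_lt_dec (Rp (6 + / 1000) e (3 + xI (/ 1000))) 0) as [h|h]; [|exact h].
    exfalso. assert (0 <= Rp (6 + / 1000) e (3 + xI (/ 1000)) * G4) by nra. nra. }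
  assert (Hneg : hc (-/1000) < 0).
  { unfold hc. rewrite cl_id by exact Bmd.
    destruct (KEY _ _ e (Bx _ Bmd) ltac:(lra) (proj2 (HxI _ Bmd))) as [G3 [G4 [D [K [H3 [H4 [HD [HK [E1 E2]]]]]]]]].
    apply ab0 in HK.
    destruct (Rle_lt_dec 0 (Rp (6 + - / 1000) e (3 + xI (- / 1000)))) as [h|h]; [|exact h].
    exfalso. assert (Rp (6 + - / 1000) e (3 + xI (- / 1000)) * G4 <= 0) by nra. nra. }
  destruct (IVT hc (-/1000) (/1000) Hcont ltac:(lra) Hneg Hpos) as [z [Hz Hz0]].
  assert (Bz : Rabs z <= /1000) by (apply iv_ab; lra).
  exists z, (xI z). split; [apply Bx, Bz|]. split.
  - unfold hc in Hz0. rewrite cl_id in Hz0 by exact Bz. exact Hz0.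
  - apply HxI, Bz.
Qed.


Lemma P7_imag b m e : P7 (0,b) m e = (Rp m e (b^2), b * Ip m e (b^2)).
Proof.
  unfold P7. cbv [Cpow Cplus Cmult RtoC fst snd C1]. unfold Rp, Ip.
  f_equal; ring.
Qed.

Lemma P7_imag_eq b m e : P7 (0,b) m e = 0%C -> Rp m e (b^2) = 0 /\ b * Ip m e (b^2) = 0.
Proof.
  intro H. rewrite P7_imag in H. unfold RtoC in H.
  pose proof (f_equal fst H) as H1. pose proof (f_equal snd H) as H2.
  cbv [fst snd] in H1, H2. split; [exact H1|exact H2].
Qed.

Lemma ball_R (x y eps : R) : ball x eps y <-> Rabs (y - x) < eps.
Proof. unfold ball; simpl; unfold AbsRing_ball, abs, minus, plus, opp; simpl. tauto. Qed.

Lemma lim_lin f L K : 0 <= K -> (forall e, 0 < e < /1000000 -> Rabs (f e - L) <= K * e) ->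
  filterlim f (at_right 0) (locally L).
Proof.
  intros HK H. apply filterlim_locally. intros eps.
  assert (P : 0 < Rmin (/1000000) (eps/(K+1))).
  { apply Rmin_glb_lt; [lra|]. apply Rdiv_lt_0_compat; [apply cond_pos|lra]. }
  exists (mkposreal _ P). intros y Hy0 Hy1.
  pose proof (proj1 (ball_R _ _ _) Hy0) as Hy2. simpl in Hy2.
  assert (Hy : y < Rmin (/1000000) (eps/(K+1))) by (rewrite Rabs_right in Hy2; lra).
  assert (Hy0' : 0 < y) by exact Hy1. clear Hy1.
  apply ball_R.
  assert (y < /1000000) by (eapply Rlt_le_trans; [exact Hy|apply Rmin_l]).
  assert (y < eps/(K+1)) by (eapply Rlt_le_trans; [exact Hy|apply Rmin_r]).
  eapply Rle_lt_trans; [apply H; lra|].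
  pose proof (cond_pos eps).
  assert (E : K*(eps/(K+1)) = eps - eps/(K+1)) by (field; lra).
  assert (P2 : 0 < eps/(K+1)) by (apply Rdiv_lt_0_compat; lra).
  assert (K * y <= K*(eps/(K+1))) by (apply Rmult_le_compat_l; lra).
  lra.
Qed.

Lemma sqrt_lip a : 0 <= a -> Rabs (sqrt a - sqrt 3) <= Rabs (a - 3).
Proof.
  intros Ha.
  assert (S3 : 1 <= sqrt 3) by (rewrite <- sqrt_1; apply sqrt_le_1_alt; lra).
  pose proof (sqrt_pos a).
  assert (E : a - 3 = (sqrt a - sqrt 3) * (sqrt a + sqrt 3)).
  { replace (a - 3) with (sqrt a * sqrt a - sqrt 3 * sqrt 3) by (rewrite !sqrt_sqrt; lra). ring. }
  rewrite E, Rabs_mult, (Rabs_right (sqrt a + sqrt 3)) by lra.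
  pose proof (Rabs_pos (sqrt a - sqrt 3)).
  assert (Rabs (sqrt a - sqrt 3) * 1 <= Rabs (sqrt a - sqrt 3) * (sqrt a + sqrt 3))
    by (apply Rmult_le_compat_l; lra).
  lra.
Qed.

Definition uc e := epsilon (inhabits 0) (fun u => exists v, box u v e /\
  Rp (6+u) e (3+v) = 0 /\ Ip (6+u) e (3+v) = 0).
Definition vc e := epsilon (inhabits 0) (fun v => box (uc e) v e /\
  Rp (6+uc e) e (3+v) = 0 /\ Ip (6+uc e) e (3+v) = 0).

Lemma spec e : 0 < e < /1000000 -> box (uc e) (vc e) e /\
  Rp (6+uc e) e (3+vc e) = 0 /\ Ip (6+uc e) e (3+vc e) = 0.
Proof.
  intros He. unfold vc. apply epsilon_spec.
  unfold uc. apply epsilon_spec.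
  destruct (EX e He) as [u [v H]]. exists u, v. exact H.
Qed.

Theorem proposition5p1 :
  exists (eps0 delta : R) (mc w : R -> R),
    0 < eps0 /\ 0 < delta /\
    (forall e, 0 < e < eps0 -> 6 - delta < mc e < 6 + delta) /\
    filterlim mc (at_right 0) (locally 6) /\
    (forall e, 0 < e < eps0 -> unique_imag_pair (mc e) e (w e)) /\
    filterlim w (at_right 0) (locally (sqrt 3)) /\
    (* uniqueness of m^c among functions with the same properties *)
    (forall g : R -> R,
       (forall e, 0 < e < eps0 -> 6 - delta < g e < 6 + delta) ->
       filterlim g (at_right 0) (locally 6) ->
       (forall e, 0 < e < eps0 -> exists we, unique_imag_pair (g e) e we) ->
       forall e, 0 < e < eps0 -> g e = mc e).
Proof.
  exists (/1000000), (/1000), (fun e => 6 + uc e), (fun e => sqrt (3 + vc e)).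
  assert (SB : forall e, 0 < e < /1000000 -> Rabs (uc e) <= 50 * e /\ Rabs (vc e) <= 50 * e).
  { intros e He. destruct (spec e He) as [B [R0 I0]]. apply BND; auto; lra. }
  split; [lra|]. split; [lra|]. split.
  { intros e He. destruct (SB e He) as [H1 _]. apply ab0 in H1. lra. }
  split.
  { apply (lim_lin _ _ 50); [lra|]. intros e He. replace (6 + uc e - 6) with (uc e) by ring.
    apply SB, He. }
  split.
  { intros e He. destruct (spec e He) as [[Bu [Bv Be]] [R0 I0]].
    apply ab0 in Bv.
    set (x := 3 + vc e) in *.
    assert (Hx : 0 < x) by (unfold x; lra).
    assert (Hw2 : sqrt x ^ 2 = x) by (simpl; rewrite Rmult_1_r; apply sqrt_sqrt; lra).
    split; [apply sqrt_lt_R0; exact Hx|].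
    intros [a b] [Hre Him]. simpl in Hre, Him. subst a. rewrite P7_imag. split.
    - intro H. unfold RtoC in H. injection H as HA HB.
      assert (HI : Ip (6 + uc e) e (b^2) = 0).
      { apply Rmult_integral in HB. destruct HB; [contradiction|assumption]. }
      assert (Hb2 : b^2 = x).
      { assert (0 <= b^2) by apply pow2_ge_0.
        destruct (Rtotal_order (b^2) x) as [h|[h|h]]; [|exact h|].
        - pose proof (Ip_decr (uc e) e (b^2) x Bu ltac:(lra) ltac:(lra) h). lra.
        - pose proof (Ip_decr (uc e) e x (b^2) Bu ltac:(lra) ltac:(lra) h). lra. }
      assert (Z : (b - sqrt x) * (b + sqrt x) = 0).
      { replace ((b - sqrt x) * (b + sqrt x)) with (b^2 - sqrt x ^ 2) by ring. lra. }
      apply Rmult_integral in Z. destruct Z as [Z|Z].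
      + left. f_equal. lra.
      + right. f_equal. lra.
    - intros [H|H]; injection H as Hb; subst b; unfold RtoC; f_equal.
      + rewrite Hw2; exact R0.
      + rewrite Hw2, I0; ring.
      + replace ((- sqrt x)^2) with (sqrt x ^ 2) by ring. rewrite Hw2; exact R0.
      + replace ((- sqrt x)^2) with (sqrt x ^ 2) by ring. rewrite Hw2, I0; ring. }
  split.
  { apply (lim_lin _ _ 50); [lra|]. intros e He.
    destruct (SB e He) as [_ Hv]. pose proof (ab0 _ _ Hv).
    eapply Rle_trans; [apply sqrt_lip; lra|].
    replace (3 + vc e - 3) with (vc e) by ring. exact Hv. }
  intros g Hg _ Hw e He.
  destruct (Hw e He) as [we [Hwpos Hiff]].
  assert (P : P7 (0, we) (g e) e = 0%C).
  { apply Hiff; [split; simpl; lra|left; reflexivity]. }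
  destruct (P7_imag_eq we (g e) e P) as [HA HB].
  assert (HI : Ip (g e) e (we^2) = 0).
  { apply Rmult_integral in HB. destruct HB; [lra|assumption]. }
  pose proof (Hg e He) as Hge.
  assert (Bu' : Rabs (g e - 6) <= /1000) by (apply iv_ab; lra).
  replace (g e) with (6 + (g e - 6)) in HA, HI by ring.
  assert (Hw2 : 0 < we^2) by (apply pow_lt; lra).
  pose proof (LOC (g e - 6) e (we^2) Bu' ltac:(lra) Hw2 HI) as Hl.
  replace (we^2) with (3 + (we^2 - 3)) in HA, HI by ring.
  destruct (spec e He) as [B [R0 I0]].
  assert (B' : box (g e - 6) (we^2 - 3) e) by (unfold box; split; [exact Bu'|]; split; [exact Hl|lra]).
  destruct (UNIQ _ _ _ _ e B' B HA HI R0 I0) as [U _]. lra.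
Qed.
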